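(* Let $\tau=i\tau_0$ with $\tau_0>0$, and set $f(\alpha)=\dfrac{\vartheta_1(\alpha/2)}{\vartheta_2(\alpha/2)}$ and $g_0(\alpha)=-\dfrac{1}{\vartheta_3\vartheta_4}\cdot\dfrac{\vartheta_2'(\alpha/2)}{\vartheta_2(\alpha/2)}$. Then for all $0<\alpha<\pi$, $$g_0(\alpha)>f(\alpha)>0.$$
   Context: Jacobi theta functions $\vartheta_k(z)=\vartheta_k(z|\tau)$ in the notation of Whittaker–Watson, with $q=e^{\pi i\tau}$, $q^{s}:=e^{\pi i\tau s}$: $\vartheta_1(z)=2\sum_{n\ge0}(-1)^nq^{(n+1/2)^2}\sin((2n+1)z)$, $\vartheta_2(z)=2\sum_{n\ge0}q^{(n+1/2)^2}\cos((2n+1)z)$, $\vartheta_3(z)=1+2\sum_{n\ge1}q^{n^2}\cos(2nz)$, $\vartheta_4(z)=1+2\sum_{n\ge1}(-1)^nq^{n^2}\cos(2nz)$. The theta-constants are $\vartheta_3=\vartheta_3(0)$, $\vartheta_4=\vartheta_4(0)$, and $\vartheta_2'(\alpha/2)$ is the derivative of $\vartheta_2$ evaluated at $\alpha/2$. *)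

(* Defs.v *)
From Stdlib Require Import Reals.
From Coquelicot Require Import Coquelicot.
Open Scope R_scope.

(* Nome power for tau = i*tau0 : q^s = e^{pi i tau s} = exp(-pi tau0 s). *)
Definition qpow (tau0 s : R) : R := exp (- PI * tau0 * s).

(* Jacobi theta functions (Whittaker--Watson) at tau = i*tau0, real argument z. *)
Definition theta1 (tau0 z : R) : R :=
  2 * Series (fun n : nat =>
        (-1) ^ n * qpow tau0 ((INR n + /2) ^ 2) * sin ((2 * INR n + 1) * z)).

Definition theta2 (tau0 z : R) : R :=
  2 * Series (fun n : nat =>
        qpow tau0 ((INR n + /2) ^ 2) * cos ((2 * INR n + 1) * z)).

Definition theta3 (tau0 z : R) : R :=
  1 + 2 * Series (fun n : nat =>
        qpow tau0 (INR (S n) ^ 2) * cos (2 * INR (S n) * z)).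

Definition theta4 (tau0 z : R) : R :=
  1 + 2 * Series (fun n : nat =>
        (-1) ^ (S n) * qpow tau0 (INR (S n) ^ 2) * cos (2 * INR (S n) * z)).

Definition f_fun (tau0 alpha : R) : R :=
  theta1 tau0 (alpha / 2) / theta2 tau0 (alpha / 2).

Definition g0_fun (tau0 alpha : R) : R :=
  - (1 / (theta3 tau0 0 * theta4 tau0 0)) *
    (Derive (theta2 tau0) (alpha / 2) / theta2 tau0 (alpha / 2)).

(* Main.v *)
Require Import Defs.
From Stdlib Require Import Reals Lra Lia Arith.
From Coquelicot Require Import Coquelicot.
Open Scope R_scope.

Fixpoint qf (p : R) (n : nat) : R :=
  match n with O => 1 | S k => qf p k * (1 - p ^ (S k)) end.

Lemma pow_lt1 (p : R) (n : nat) : 0 <= p < 1 -> (0 < n)%nat -> p ^ n < 1.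
Proof.
  intros Hp Hn. destruct n as [|n]; [lia|].
  induction n as [|n IH]. simpl; lra.
  change (p ^ S (S n)) with (p * p ^ (S n)).
  assert (0 <= p ^ S n) by (apply pow_le; lra).
  assert (p ^ S n < 1) by (apply IH; lia). nra.
Qed.

Lemma pow_le_p (p : R) (n : nat) : 0 <= p < 1 -> (0 < n)%nat -> p ^ n <= p.
Proof.
  intros Hp Hn. destruct n as [|n]; [lia|].
  simpl. assert (0 <= p ^ n) by (apply pow_le; lra).
  assert (p ^ n <= 1). { destruct n. simpl; lra. left; apply pow_lt1; [lra|lia]. }
  nra.
Qed.

Lemma pow_decr_exp (p : R) (m n : nat) : 0 <= p <= 1 -> (m <= n)%nat -> p ^ n <= p ^ m.
Proof.
  intros Hp H. induction H. lra.
  simpl. assert (0 <= p ^ m0) by (apply pow_le; lra). nra.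
Qed.

Lemma exp_le_mono (x y : R) : x <= y -> exp x <= exp y.
Proof. intros [H|H]. left; apply exp_increasing; auto. subst; lra. Qed.

Section QF.
Variable p : R.
Hypothesis p0 : 0 < p.
Hypothesis p1 : p < 1.

Lemma qf_pos (n : nat) : 0 < qf p n.
Proof.
  induction n; simpl. lra.
  assert (p * p ^ n < 1) by (apply (pow_lt1 p (S n)); lia || lra).
  apply Rmult_lt_0_compat; lra.
Qed.

Lemma qf_decr (n : nat) : qf p (S n) <= qf p n.
Proof.
  simpl. assert (0 <= p * p ^ n) by (apply (pow_le p (S n)); lra).
  pose proof (qf_pos n). nra.
Qed.

Lemma qf_le1 (n : nat) : qf p n <= 1.
Proof. induction n. simpl; lra. pose proof (qf_decr n); lra. Qed.

Lemma exp_le_1m (a : R) : 0 <= a <= p -> exp (- (a / (1 - p))) <= 1 - a.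
Proof.
  intros Ha.
  assert (H1 : a / (1 - a) <= a / (1 - p)).
  { unfold Rdiv. apply Rmult_le_compat_l; [lra|]. apply Rinv_le_contravar; lra. }
  assert (H2 : exp (- (a / (1 - p))) <= exp (- (a / (1 - a)))).
  { destruct (Req_dec (a / (1 - a)) (a / (1 - p))) as [E|E].
    rewrite E; lra. left. apply exp_increasing. lra. }
  rewrite (exp_Ropp (a / (1 - a))) in H2.
  pose proof (exp_ineq1_le (a / (1 - a))).
  assert (1 + a / (1 - a) = / (1 - a)) by (field; lra).
  assert (/ exp (a / (1 - a)) <= 1 - a).
  { assert (Hi : / exp (a / (1 - a)) <= / / (1 - a)).
    { apply Rinv_le_contravar. apply Rinv_0_lt_compat; lra. lra. }
    rewrite Rinv_inv in Hi. exact Hi. }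
  lra.
Qed.

Definition Glow := exp (- (p / (1 - p) ^ 2)).

Lemma qf_lower_aux (n : nat) : exp (- (p * (1 - p ^ n) / (1 - p) ^ 2)) <= qf p n.
Proof.
  induction n.
  - simpl. replace (- (p * (1 - 1) / ((1 - p) * ((1 - p) * 1)))) with 0 by (field; lra).
    rewrite exp_0; lra.
  - simpl qf.
    assert (Hpn : 0 <= p ^ S n <= p).
    { split. apply pow_le; lra. apply pow_le_p; lra || lia. }
    pose proof (exp_le_1m _ Hpn).
    replace (- (p * (1 - p ^ S n) / (1 - p) ^ 2)) with
      ((- (p * (1 - p ^ n) / (1 - p) ^ 2)) + (- (p ^ S n / (1 - p)))).
    2:{ simpl. field. lra. }
    rewrite exp_plus.
    apply Rmult_le_compat; try (left; apply exp_pos); assumption.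
Qed.

Lemma qf_lower (n : nat) : Glow <= qf p n.
Proof.
  eapply Rle_trans; [|apply qf_lower_aux].
  unfold Glow. apply exp_le_mono.
  assert (0 <= p ^ n) by (apply pow_le; lra).
  assert (0 < (1 - p) ^ 2) by (apply pow_lt; lra).
  unfold Rdiv. apply Ropp_le_contravar.
  apply Rmult_le_compat_r. left; apply Rinv_0_lt_compat; lra.
  nra.
Qed.

Lemma Glow_pos : 0 < Glow.
Proof. apply exp_pos. Qed.

Definition GG : R := real (Lim_seq (qf p)).

Lemma GG_lim : is_lim_seq (qf p) GG.
Proof.
  assert (H : ex_finite_lim_seq (qf p)).
  { apply ex_finite_lim_seq_decr with Glow. apply qf_decr. apply qf_lower. }
  pose proof (Lim_seq_correct' _ H) as H1.
  destruct H as [l Hl]. unfold GG. rewrite (is_lim_seq_unique _ _ Hl) in *. simpl. exact H1.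
Qed.

Lemma GG_bounds : Glow <= GG <= 1.
Proof.
  split.
  - assert (H := is_lim_seq_le (fun _ => Glow) (qf p) Glow GG qf_lower (is_lim_seq_const _) GG_lim).
    simpl in H. exact H.
  - assert (H := is_lim_seq_le (qf p) (fun _ => 1) GG 1 qf_le1 GG_lim (is_lim_seq_const _)).
    simpl in H. exact H.
Qed.

End QF.

Definition gb (p : R) (M k : nat) : R :=
  if (k <=? M)%nat then qf p M / (qf p k * qf p (M - k)) else 0.

Section GB.
Variable p : R.
Hypothesis p0 : 0 < p.
Hypothesis p1 : p < 1.

Lemma gb_closed M k : (k <= M)%nat -> gb p M k = qf p M / (qf p k * qf p (M - k)).
Proof. intros H. unfold gb. apply Nat.leb_le in H. rewrite H. reflexivity. Qed.

Lemma gb_zero M k : (M < k)%nat -> gb p M k = 0.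
Proof. intros H. unfold gb. destruct (Nat.leb_spec k M); [lia|reflexivity]. Qed.

Lemma gb_diag M : gb p M M = 1.
Proof. rewrite gb_closed by lia. rewrite Nat.sub_diag. simpl.
  pose proof (qf_pos p p0 p1 M). field. lra. Qed.

Lemma gb_0 M : gb p M 0 = 1.
Proof. rewrite gb_closed by lia. rewrite Nat.sub_0_r. simpl.
  pose proof (qf_pos p p0 p1 M). field. lra. Qed.

Lemma one_m_ne (n : nat) : 1 - p * p ^ n <> 0.
Proof. pose proof (pow_lt1 p (S n) ltac:(lra) ltac:(lia)). simpl in H. lra. Qed.

Lemma qf_ne n : qf p n <> 0.
Proof. pose proof (qf_pos p p0 p1 n). lra. Qed.

Lemma gbA M k : gb p (S M) (S k) = gb p M k + p ^ (S k) * gb p M (S k).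
Proof.
  destruct (lt_eq_lt_dec k M) as [[H|H]|H].
  - destruct (Nat.le_exists_sub (S k) M H) as [r [HM _]]. subst M.
    rewrite !gb_closed by lia.
    replace (S (r + S k) - S k)%nat with (S r) by lia.
    replace (r + S k - k)%nat with (S r) by lia.
    replace (r + S k - S k)%nat with r by lia.
    change (qf p (S (r + S k))) with (qf p (r + S k) * (1 - p ^ (S (r + S k)))).
    change (qf p (S r)) with (qf p r * (1 - p ^ (S r))).
    change (qf p (S k)) with (qf p k * (1 - p ^ (S k))).
    replace (S (r + S k)) with (S (S (r + k))) by lia.
    simpl pow. rewrite pow_add.
    pose proof (qf_ne (r + S k)). pose proof (qf_ne r). pose proof (qf_ne k).
    pose proof (one_m_ne r). pose proof (one_m_ne k).
    field. repeat split; assumption.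
  - subst M. rewrite (gb_zero k (S k)) by lia. rewrite !gb_diag. ring.
  - rewrite !gb_zero by lia. ring.
Qed.


Lemma gbB M k : gb p (S M) (S k) = p ^ (M - k) * gb p M k + gb p M (S k).
Proof.
  destruct (lt_eq_lt_dec k M) as [[H|H]|H].
  - destruct (Nat.le_exists_sub (S k) M H) as [r [HM _]]. subst M.
    rewrite !gb_closed by lia.
    replace (S (r + S k) - S k)%nat with (S r) by lia.
    replace (r + S k - k)%nat with (S r) by lia.
    replace (r + S k - S k)%nat with r by lia.
    change (qf p (S (r + S k))) with (qf p (r + S k) * (1 - p ^ (S (r + S k)))).
    change (qf p (S r)) with (qf p r * (1 - p ^ (S r))).
    change (qf p (S k)) with (qf p k * (1 - p ^ (S k))).
    replace (S (r + S k)) with (S (S (r + k))) by lia.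
    simpl pow. rewrite pow_add.
    pose proof (qf_ne (r + S k)). pose proof (qf_ne r). pose proof (qf_ne k).
    pose proof (one_m_ne r). pose proof (one_m_ne k).
    field. repeat split; assumption.
  - subst M. rewrite (gb_zero k (S k)) by lia. rewrite !gb_diag. rewrite Nat.sub_diag. simpl. ring.
  - rewrite !gb_zero by lia. ring.
Qed.

Lemma gbC M k : gb p M (S k) * (1 - p ^ (S k)) = gb p M k * (1 - p ^ (M - k)).
Proof.
  destruct (lt_eq_lt_dec k M) as [[H|H]|H].
  - destruct (Nat.le_exists_sub (S k) M H) as [r [HM _]]. subst M.
    rewrite !gb_closed by lia.
    replace (r + S k - k)%nat with (S r) by lia.
    replace (r + S k - S k)%nat with r by lia.
    change (qf p (S r)) with (qf p r * (1 - p ^ (S r))).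
    change (qf p (S k)) with (qf p k * (1 - p ^ (S k))).
    pose proof (qf_ne (r + S k)). pose proof (qf_ne r). pose proof (qf_ne k).
    pose proof (one_m_ne r). pose proof (one_m_ne k).
    simpl pow. field. repeat split; assumption.
  - subst M. rewrite (gb_zero k (S k)) by lia. rewrite Nat.sub_diag. simpl. ring.
  - rewrite !gb_zero by lia. ring.
Qed.

Lemma gbDP M k : gb p (S (S M)) (S k) = (1 + p ^ (S M)) * gb p M k
  + (match k with O => 0 | S k' => p ^ (M - k') * gb p M k' end)
  + p ^ (S k) * gb p M (S k).
Proof.
  rewrite gbA. rewrite (gbA M k).
  destruct k as [|k'].
  - rewrite !gb_0. pose proof (gbC M 0) as HC. rewrite gb_0, Nat.sub_0_r in HC.
    simpl pow in *. rewrite Rmult_1_r in *.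
    assert (E : p ^ M = 1 - gb p M 1 * (1 - p)) by lra. rewrite E. ring.
  - rewrite gbB. pose proof (gbC M (S k')) as HC.
    destruct (le_lt_dec (S k') M) as [H|H].
    + assert (E : p ^ (S M) = p ^ (S (S k')) * p ^ (M - S k')).
      { rewrite <- pow_add. f_equal. lia. }
      rewrite E.
      assert (E2 : p ^ (S (S k')) * gb p M (S k') =
                   p ^ (S (S k')) * (gb p M (S k') * (1 - p ^ (M - S k')))
                   + p ^ (S (S k')) * p ^ (M - S k') * gb p M (S k')) by ring.
      rewrite <- HC in E2. lra.
    + rewrite (gb_zero M (S k')), (gb_zero M (S (S k'))) by lia. ring.
Qed.

Lemma gb_sym M k : (k <= M)%nat -> gb p M k = gb p M (M - k).
Proof.
  intros H. rewrite !gb_closed by lia. replace (M - (M - k))%nat with k by lia.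
  rewrite Rmult_comm. reflexivity.
Qed.

Lemma gb_nonneg M k : 0 <= gb p M k.
Proof.
  unfold gb. destruct (k <=? M)%nat; [|lra].
  pose proof (qf_pos p p0 p1 M). pose proof (qf_pos p p0 p1 k). pose proof (qf_pos p p0 p1 (M - k)).
  apply Rlt_le, Rdiv_lt_0_compat; [lra|]. apply Rmult_lt_0_compat; lra.
Qed.

Lemma gb_bound M k : gb p M k <= / (Glow p * Glow p).
Proof.
  unfold gb. destruct (k <=? M)%nat.
  2:{ left. apply Rinv_0_lt_compat. pose proof (Glow_pos p). nra. }
  pose proof (qf_pos p p0 p1 M). pose proof (qf_lower p p0 p1 k). pose proof (qf_lower p p0 p1 (M - k)).
  pose proof (qf_le1 p p0 p1 M). pose proof (Glow_pos p).
  unfold Rdiv. apply Rle_trans with (1 * / (qf p k * qf p (M - k))).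
  apply Rmult_le_compat_r. left; apply Rinv_0_lt_compat; nra. lra.
  rewrite Rmult_1_l. apply Rinv_le_contravar. nra. apply Rmult_le_compat; lra.
Qed.

End GB.

Definition bF (q : R) (N n : nat) : R := gb (q*q) (2*N+1) (N+1+n) * q ^ (n*n+n).
Definition EF (q : R) (N n : nat) : R := gb (q*q) (2*N) (N+n) * q ^ (n*n).
Definition mir (n : nat) : nat := match n with O => 1%nat | S k => k end.

Section Fam.
Variable q : R.
Hypothesis q0 : 0 < q.
Hypothesis q1 : q < 1.
Local Notation p := (q*q).

Lemma pp0 : 0 < p. Proof. nra. Qed.
Lemma pp1 : p < 1. Proof. nra. Qed.

Lemma qE_S n : q ^ (S n * S n + S n) = q ^ (n * n + n) * p ^ (S n).
Proof.
  rewrite Rpow_mult_distr, <- !pow_add. f_equal. nia.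
Qed.

Lemma qsq_S n : q ^ (S n * S n) = q ^ (n * n) * q ^ (2 * n + 1).
Proof. rewrite <- pow_add. f_equal. nia. Qed.

Lemma p_q m : p ^ m = q ^ (2 * m).
Proof. rewrite Rpow_mult_distr, <- pow_add. f_equal. lia. Qed.

Lemma bF_zero N n : (N < n)%nat -> bF q N n = 0.
Proof. intros H. unfold bF. rewrite gb_zero by lia. ring. Qed.

Lemma EF_zero N n : (N < n)%nat -> EF q N n = 0.
Proof. intros H. unfold EF. rewrite gb_zero by lia. ring. Qed.

Lemma bF_rec N n : bF q (S N) n =
  (1 + p ^ (S N) * p ^ (S N)) * bF q N n + p ^ (S N) * (bF q N (pred n) + bF q N (S n)).
Proof.
  pose proof pp0 as P0. pose proof pp1 as P1.
  unfold bF.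
  replace (2 * S N + 1)%nat with (S (S (2 * N + 1))) by lia.
  replace (S N + 1 + n)%nat with (S (N + 1 + n)) by lia.
  rewrite (gbDP p P0 P1).
  assert (Ea : p ^ (S (2 * N + 1)) = p ^ (S N) * p ^ (S N)) by (rewrite <- pow_add; f_equal; lia).
  rewrite Ea.
  destruct n as [|n'].
  - replace (N + 1 + 0)%nat with (S N) by lia.
    replace (N + 1 + 1)%nat with (S (S N)) by lia.
    simpl pred. replace (N + 1 + 0)%nat with (S N) by lia.
    rewrite (gb_sym p (2 * N + 1) N) by lia.
    replace (2 * N + 1 - N)%nat with (S N) by lia.
    replace (2 * N + 1 - N)%nat with (S N) by lia.
    simpl pow. ring.
  - replace (N + 1 + S n')%nat with (S (S (N + n'))) by lia.
    replace (N + 1 + S (S n'))%nat with (S (S (S (N + n')))) by lia.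
    simpl pred. replace (N + 1 + n')%nat with (S (N + n')) by lia.
    rewrite (qE_S (S n')). rewrite (qE_S n').
    destruct (le_lt_dec n' N) as [H|H].
    + assert (E1 : p ^ (2 * N + 1 - S (N + n')) * p ^ (S n') = p ^ (S N))
        by (rewrite <- pow_add; f_equal; lia).
      assert (E2 : p ^ (S (S (S (N + n')))) = p ^ (S N) * p ^ (S (S n')))
        by (rewrite <- pow_add; f_equal; lia).
      rewrite E2.
      transitivity ((1 + p ^ S N * p ^ S N) * gb p (2 * N + 1) (S (S (N + n'))) * (q ^ (n' * n' + n') * p ^ S n')
        + gb p (2 * N + 1) (S (N + n')) * q ^ (n' * n' + n') * (p ^ (2 * N + 1 - S (N + n')) * p ^ S n')
        + p ^ S N * p ^ S (S n') * gb p (2 * N + 1) (S (S (S (N + n')))) * (q ^ (n' * n' + n') * p ^ S n')).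
      ring. rewrite E1. ring.
    + rewrite (gb_zero p (2 * N + 1) (S (N + n'))), (gb_zero p (2 * N + 1) (S (S (N + n')))),
        (gb_zero p (2 * N + 1) (S (S (S (N + n'))))) by lia. ring.
Qed.

Lemma EF_rec N n : EF q (S N) n =
  (1 + q ^ (2 * N + 1) * q ^ (2 * N + 1)) * EF q N n
  + q ^ (2 * N + 1) * (EF q N (mir n) + EF q N (S n)).
Proof.
  pose proof pp0 as P0. pose proof pp1 as P1.
  unfold EF.
  replace (2 * S N)%nat with (S (S (2 * N))) by lia.
  replace (S N + n)%nat with (S (N + n)) by lia.
  rewrite (gbDP p P0 P1).
  assert (Ea : p ^ (S (2 * N)) = q ^ (2 * N + 1) * q ^ (2 * N + 1)).
  { rewrite Rpow_mult_distr. f_equal; f_equal; lia. }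
  rewrite Ea.
  destruct n as [|n'].
  - simpl mir. rewrite Nat.add_0_r.
    destruct N as [|N'].
    + simpl. rewrite (gb_zero p 0 1) by lia. ring.
    + replace (S N')%nat with (S N') by reflexivity.
      rewrite (gb_sym p (2 * S N') N') by lia.
      replace (2 * S N' - N')%nat with (S (S N')) by lia.
      replace (2 * S N' - N')%nat with (S (S N')) by lia.
      replace (S N' + 1)%nat with (S (S N')) by lia.
      assert (E2 : p ^ (S (S N')) = q ^ (2 * S N' + 1) * q ^ 1)
        by (rewrite Rpow_mult_distr, <- !pow_add; f_equal; lia).
      rewrite E2. simpl (1 * 1)%nat. simpl (0 * 0)%nat. simpl pow. ring.
  - replace (N + S n')%nat with (S (N + n')) by lia.
    replace (N + S (S n'))%nat with (S (S (N + n'))) by lia.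
    simpl mir.
    rewrite (qsq_S (S n')). rewrite (qsq_S n').
    destruct (le_lt_dec n' N) as [H|H].
    + assert (E1 : p ^ (2 * N - (N + n')) * q ^ (2 * n' + 1) = q ^ (2 * N + 1))
        by (rewrite Rpow_mult_distr, <- !pow_add; f_equal; lia).
      assert (E2 : p ^ (S (S (N + n'))) = q ^ (2 * N + 1) * q ^ (2 * S n' + 1))
        by (rewrite Rpow_mult_distr, <- !pow_add; f_equal; lia).
      rewrite E2.
      transitivity ((1 + q ^ (2 * N + 1) * q ^ (2 * N + 1)) * gb p (2 * N) (S (N + n')) * (q ^ (n' * n') * q ^ (2 * n' + 1))
        + gb p (2 * N) (N + n') * q ^ (n' * n') * (p ^ (2 * N - (N + n')) * q ^ (2 * n' + 1))
        + q ^ (2 * N + 1) * q ^ (2 * S n' + 1) * gb p (2 * N) (S (S (N + n'))) * (q ^ (n' * n') * q ^ (2 * n' + 1))).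
      ring. rewrite E1. ring.
    + rewrite (gb_zero p (2 * N) (N + n')), (gb_zero p (2 * N) (S (N + n'))),
        (gb_zero p (2 * N) (S (S (N + n')))) by lia. ring.
Qed.

End Fam.

Lemma cos_prod2 (x y : R) : 2 * cos (2 * x) * cos y = cos (y + 2 * x) + cos (y - 2 * x).
Proof. rewrite cos_plus, cos_minus. ring. Qed.

Lemma sum_rec2 (b : nat -> R) (a x : R) (L : nat) :
  sum_f_R0 (fun n => b n * cos ((2 * INR n + 1) * x)) L * (1 + a * a + 2 * a * cos (2 * x)) =
  sum_f_R0 (fun n => ((1 + a * a) * b n + a * (b (pred n) + b (S n))) * cos ((2 * INR n + 1) * x)) L
  - a * b (S L) * cos ((2 * INR L + 1) * x) + a * b L * cos ((2 * INR L + 3) * x).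
Proof.
  induction L as [|L IH].
  - simpl. pose proof (cos_prod2 x x) as H.
    replace (x - 2 * x) with (- x) in H by ring. rewrite cos_neg in H.
    replace (x + 2 * x) with ((2 * 0 + 3) * x) in H by ring.
    replace ((2 * 0 + 1) * x) with x by ring.
    assert (cos (2 * x) * cos x = (cos ((2 * 0 + 3) * x) + cos x) / 2) by lra.
    transitivity (b 0%nat * cos x * (1 + a * a) + a * b 0%nat * (2 * cos (2 * x) * cos x)). ring.
    rewrite H. ring.
  - rewrite !tech5. rewrite Rmult_plus_distr_r, IH. rewrite S_INR.
    pose proof (cos_prod2 x ((2 * (INR L + 1) + 1) * x)) as H.
    replace ((2 * (INR L + 1) + 1) * x + 2 * x) with ((2 * (INR L + 1) + 3) * x) in H by ring.
    replace ((2 * (INR L + 1) + 1) * x - 2 * x) with ((2 * INR L + 1) * x) in H by ring.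
    replace ((2 * INR L + 3) * x) with ((2 * (INR L + 1) + 1) * x) by ring.
    simpl pred.
    transitivity (sum_f_R0 (fun n => ((1 + a * a) * b n + a * (b (pred n) + b (S n))) * cos ((2 * INR n + 1) * x)) L
      - a * b (S L) * cos ((2 * INR L + 1) * x) + a * b L * cos ((2 * (INR L + 1) + 1) * x)
      + b (S L) * cos ((2 * (INR L + 1) + 1) * x) * (1 + a * a)
      + a * b (S L) * (2 * cos (2 * x) * cos ((2 * (INR L + 1) + 1) * x))). ring.
    rewrite H. ring.
Qed.

Lemma sum_rec1 (E : nat -> R) (a s : R) (Hs : s * s = 1) (L : nat) :
  (2 * sum_f_R0 (fun n => E n * s ^ n) L - E 0%nat) * (1 + a * a + 2 * a * s) =
  2 * sum_f_R0 (fun n => ((1 + a * a) * E n + a * (E (mir n) + E (S n))) * s ^ n) L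
  - ((1 + a * a) * E 0%nat + a * (E 1%nat + E 1%nat))
  - 2 * a * E (S L) * s ^ L + 2 * a * E L * s ^ (S L).
Proof.
  induction L as [|L IH].
  - simpl. ring.
  - rewrite !tech5.
    transitivity ((2 * sum_f_R0 (fun n => E n * s ^ n) L - E 0%nat) * (1 + a * a + 2 * a * s)
       + 2 * E (S L) * s ^ (S L) * (1 + a * a + 2 * a * s)). ring.
    rewrite IH. simpl mir.
    assert (Hp : s ^ (S (S L)) = s ^ L) by (simpl; rewrite <- Rmult_assoc, Hs; ring).
    transitivity (2 * sum_f_R0 (fun n => ((1 + a * a) * E n + a * (E (mir n) + E (S n))) * s ^ n) L -
       ((1 + a * a) * E 0%nat + a * (E 1%nat + E 1%nat)) - 2 * a * E (S L) * s ^ L + 2 * a * E L * s ^ S L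
       + 2 * E (S L) * s ^ S L * (1 + a * a) + 2 * a * E (S L) * (s ^ (S (S L)) + s ^ L)).
    simpl pow. assert (Hq : s * (s * s ^ L) = s ^ L) by (rewrite <- Rmult_assoc, Hs; ring). replace (s * (s * s ^ L) + s ^ L) with (2 * (s * (s * s ^ L))) by (rewrite Hq; ring). ring.
    rewrite Hp. ring.
Qed.

Section Fam2.
Variable q : R.
Hypothesis q0 : 0 < q.
Hypothesis q1 : q < 1.
Local Notation p := (q*q).

Fixpoint PD (N : nat) (x : R) : R :=
  match N with
  | O => 1
  | S N' => PD N' x * (1 + p ^ (S N') * p ^ (S N') + 2 * p ^ (S N') * cos (2 * x))
  end.

Fixpoint PE (s : R) (N : nat) : R :=
  match N with
  | O => 1
  | S N' => PE s N' * (1 + q ^ (2 * N' + 1) * q ^ (2 * N' + 1) + 2 * q ^ (2 * N' + 1) * s)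
  end.

Lemma fam2 (K : nat) (x : R) : cos x * PD K x = sum_f_R0 (fun n => bF q K n * cos ((2 * INR n + 1) * x)) K.
Proof.
  induction K as [|K IH].
  - simpl. unfold bF. simpl. rewrite (gb_diag _ (pp0 q q0) (pp1 q q0 q1)). simpl. replace ((2 * 0 + 1) * x) with x by ring. ring.
  - change (PD (S K) x) with (PD K x * (1 + p ^ (S K) * p ^ (S K) + 2 * p ^ (S K) * cos (2 * x))).
    rewrite <- Rmult_assoc, IH.
    assert (Hx : sum_f_R0 (fun n => bF q K n * cos ((2 * INR n + 1) * x)) K =
                 sum_f_R0 (fun n => bF q K n * cos ((2 * INR n + 1) * x)) (S K)).
    { rewrite tech5. rewrite (bF_zero q K (S K)) by lia. ring. }
    rewrite Hx, sum_rec2.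
    rewrite (bF_zero q K (S (S K))), (bF_zero q K (S K)) by lia.
    rewrite !Rmult_0_r, !Rmult_0_l, Rminus_0_r, Rplus_0_r.
    apply sum_eq. intros i _. rewrite (bF_rec q q0 q1 K i). reflexivity.
Qed.

Lemma fam1 (s : R) (Hs : s * s = 1) (K : nat) : PE s K = 2 * sum_f_R0 (fun n => EF q K n * s ^ n) K - EF q K 0.
Proof.
  induction K as [|K IH].
  - simpl. unfold EF. simpl. rewrite (gb_diag _ (pp0 q q0) (pp1 q q0 q1)). ring.
  - change (PE s (S K)) with (PE s K * (1 + q ^ (2 * K + 1) * q ^ (2 * K + 1) + 2 * q ^ (2 * K + 1) * s)).
    rewrite IH.
    assert (Hx : sum_f_R0 (fun n => EF q K n * s ^ n) K =
                 sum_f_R0 (fun n => EF q K n * s ^ n) (S K)).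
    { rewrite tech5. rewrite (EF_zero q K (S K)) by lia. ring. }
    rewrite Hx, (sum_rec1 _ _ _ Hs).
    rewrite (EF_zero q K (S (S K))), (EF_zero q K (S K)) by lia.
    rewrite (EF_rec q q0 q1 K 0). simpl mir.
    assert (sum_f_R0 (fun n => ((1 + q ^ (2 * K + 1) * q ^ (2 * K + 1)) * EF q K n +
        q ^ (2 * K + 1) * (EF q K (mir n) + EF q K (S n))) * s ^ n) (S K) =
        sum_f_R0 (fun n => EF q (S K) n * s ^ n) (S K)).
    { apply sum_eq. intros i _. rewrite (EF_rec q q0 q1 K i). reflexivity. }
    rewrite H. ring.
Qed.

End Fam2.

Lemma sumcos_der (c : nat -> R) (L : nat) (x : R) :
  is_derive (fun y => sum_f_R0 (fun n => c n * cos ((2 * INR n + 1) * y)) L) x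
            (sum_f_R0 (fun n => - (c n * (2 * INR n + 1) * sin ((2 * INR n + 1) * x))) L).
Proof.
  induction L as [|L IH].
  - simpl. auto_derive. auto. ring.
  - simpl. apply (is_derive_plus (fun y => sum_f_R0 (fun n => c n * cos ((2 * INR n + 1) * y)) L)
       (fun y => c (S L) * cos ((2 * INR (S L) + 1) * y))). exact IH.
    auto_derive. auto. ring.
Qed.

Lemma sum_neg (f : nat -> R) L : sum_f_R0 (fun n => - f n) L = - sum_f_R0 f L.
Proof. induction L; simpl. ring. rewrite IHL. ring. Qed.

Section Der.
Variable q : R.
Hypothesis q0 : 0 < q.
Hypothesis q1 : q < 1.
Local Notation p := (q*q).

Fixpoint PDd (N : nat) (x : R) : R :=
  match N with
  | O => 0
  | S N' => PDd N' x * (1 + p ^ (S N') * p ^ (S N') + 2 * p ^ (S N') * cos (2 * x))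
            + PD q N' x * (- (4 * p ^ (S N') * sin (2 * x)))
  end.

Lemma PD_der (K : nat) (x : R) : is_derive (PD q K) x (PDd K x).
Proof.
  induction K as [|K IH].
  - simpl. apply is_derive_ext with (fun _ => 1). reflexivity.
    apply (is_derive_const (K := R_AbsRing) (V := R_NormedModule) 1 x).
  - set (a := p ^ (S K)).
    assert (HD : is_derive (fun y => 1 + a * a + 2 * a * cos (2 * y)) x (- (4 * a * sin (2 * x)))).
    { auto_derive. auto. ring. }
    pose proof (is_derive_mult (PD q K) _ x _ _ IH HD Rmult_comm) as H.
    simpl. eapply is_derive_ext; [|exact H]. intros t. reflexivity.
Qed.

Lemma sumsin_eq (K : nat) (x : R) :
  sum_f_R0 (fun n => bF q K n * (2 * INR n + 1) * sin ((2 * INR n + 1) * x)) K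
  = sin x * PD q K x - cos x * PDd K x.
Proof.
  assert (H1 := sumcos_der (bF q K) K x).
  assert (H2 : is_derive (fun y => cos y * PD q K y) x (- sin x * PD q K x + cos x * PDd K x)).
  { pose proof (is_derive_mult cos (PD q K) x (- sin x) _ ltac:(auto_derive; auto; ring) (PD_der K x) Rmult_comm) as H.
    exact H. }
  assert (H3 : is_derive (fun y => sum_f_R0 (fun n => bF q K n * cos ((2 * INR n + 1) * y)) K) x
                 (- sin x * PD q K x + cos x * PDd K x)).
  { eapply is_derive_ext; [|exact H2]. intros t. simpl. apply fam2; assumption. }
  apply is_derive_unique in H1. apply is_derive_unique in H3. rewrite H1 in H3.
  rewrite sum_neg in H3. lra.
Qed.

End Der.

Section Ineq.
Variable q : R.
Hypothesis q0 : 0 < q.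
Hypothesis q1 : q < 1.
Local Notation p := (q*q).

Lemma ppow_bounds m : 0 <= p ^ m <= 1.
Proof.
  pose proof (pp0 q q0). pose proof (pp1 q q0 q1). split. apply pow_le; lra.
  destruct m. simpl; lra. left; apply pow_lt1; [lra|lia].
Qed.

Lemma Dfac_lower (t c : R) : 0 <= t -> -1 <= c -> (1 - t) * (1 - t) <= 1 + t * t + 2 * t * c.
Proof. intros. nra. Qed.

Lemma PD_lower K y : qf p K * qf p K <= PD q K y.
Proof.
  induction K as [|K IH]; simpl. lra.
  pose proof (ppow_bounds (S K)) as [H0 H1]. simpl in H0, H1.
  pose proof (qf_pos p (pp0 q q0) (pp1 q q0 q1) K).
  pose proof (COS_bound (2 * y)) as [C1 C2].
  pose proof (Dfac_lower (p * p ^ K) (cos (2 * y)) H0 C1).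
  replace (qf p K * (1 - p * p ^ K) * (qf p K * (1 - p * p ^ K)))
    with ((qf p K * qf p K) * ((1 - p * p ^ K) * (1 - p * p ^ K))) by ring.
  apply Rmult_le_compat; try nra.
Qed.

Lemma PD_pos K y : 0 < PD q K y.
Proof.
  pose proof (qf_pos p (pp0 q q0) (pp1 q q0 q1) K). pose proof (PD_lower K y). nra.
Qed.

Lemma Dfac_pos m y : 0 <= 1 + p ^ m * p ^ m + 2 * p ^ m * cos (2 * y).
Proof.
  pose proof (ppow_bounds m) as [H0 H1]. pose proof (COS_bound (2 * y)) as [C1 C2].
  pose proof (Dfac_lower _ _ H0 C1). nra.
Qed.

Variable x : R.
Hypothesis hs : 0 <= sin (2 * x).

Lemma PDd_nonpos K : PDd q K x <= 0.
Proof.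
  induction K as [|K IH]; simpl. lra.
  pose proof (Dfac_pos (S K) x). simpl in H.
  pose proof (PD_pos K x). pose proof (ppow_bounds (S K)) as [P0 P1]. simpl in P0.
  assert (PDd q K x * (1 + p * p ^ K * (p * p ^ K) + 2 * (p * p ^ K) * cos (2 * x)) <= 0).
  { apply Rmult_le_0_r; lra. }
  assert (0 <= PD q K x * (4 * (p * p ^ K) * sin (2 * x))).
  { apply Rmult_le_pos; [lra|]. apply Rmult_le_pos; [|lra]. lra. }
  lra.
Qed.

Lemma PDd_bound K : PD q (S K) x * (4 * p * sin (2 * x)) <=
                    - PDd q (S K) x * (1 + p * p + 2 * p * cos (2 * x)).
Proof.
  induction K as [|K IH].
  - simpl. right. ring.
  - change (PD q (S (S K)) x) with (PD q (S K) x * (1 + p ^ (S (S K)) * p ^ (S (S K)) + 2 * p ^ (S (S K)) * cos (2 * x))).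
    change (PDd q (S (S K)) x) with (PDd q (S K) x * (1 + p ^ (S (S K)) * p ^ (S (S K)) + 2 * p ^ (S (S K)) * cos (2 * x))
            + PD q (S K) x * (- (4 * p ^ (S (S K)) * sin (2 * x)))).
    set (D2 := 1 + p ^ (S (S K)) * p ^ (S (S K)) + 2 * p ^ (S (S K)) * cos (2 * x)) in *.
    assert (HD2 : 0 <= D2) by apply Dfac_pos.
    pose proof (ppow_bounds (S (S K))) as [H0 H1].
    pose proof (PD_pos (S K) x).
    assert (HD1 : 0 <= 1 + p * p + 2 * p * cos (2 * x)).
    { pose proof (Dfac_pos 1 x). simpl in H2. replace (p * 1) with p in H2 by ring. exact H2. }
    assert (0 <= PD q (S K) x * (4 * p ^ (S (S K)) * sin (2 * x)) * (1 + p * p + 2 * p * cos (2 * x))).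
    { apply Rmult_le_pos; [|lra]. apply Rmult_le_pos; [lra|]. apply Rmult_le_pos; [lra|]. lra. }
    assert (PD q (S K) x * (4 * p * sin (2 * x)) * D2 <= - PDd q (S K) x * (1 + p * p + 2 * p * cos (2 * x)) * D2).
    { apply Rmult_le_compat_r; assumption. }
    nra.
Qed.

End Ineq.

Section Prod.
Variable q : R.
Hypothesis q0 : 0 < q.
Hypothesis q1 : q < 1.
Local Notation p := (q*q).

Fixpoint Pp (K : nat) : R := match K with O => 1 | S K' => Pp K' * (1 + p ^ (S K')) end.
Fixpoint Wh (K : nat) : R := match K with O => 1 | S K' => Wh K' * (1 - p ^ (2 * K' + 1)) end.
Fixpoint Ev (K : nat) : R := match K with O => 1 | S K' => Ev K' * (1 - p ^ (2 * K' + 2)) end.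

Lemma Pp_pos K : 0 < Pp K.
Proof. induction K; simpl. lra. pose proof (ppow_bounds q q0 q1 (S K)). simpl in H. nra. Qed.

Lemma Wh_pos K : 0 < Wh K.
Proof.
  induction K; cbn [Wh]. lra.
  assert (p ^ (2 * K + 1) < 1) by (apply pow_lt1; [pose proof (pp0 q q0); pose proof (pp1 q q0 q1); lra | lia]).
  nra.
Qed.

Lemma Ev_bounds K : 0 < Ev K <= 1.
Proof.
  induction K; cbn [Ev]. lra.
  assert (p ^ (2 * K + 2) < 1) by (apply pow_lt1; [pose proof (pp0 q q0); pose proof (pp1 q q0 q1); lra | lia]).
  assert (0 <= p ^ (2 * K + 2)) by (apply pow_le; pose proof (pp0 q q0); lra).
  nra.
Qed.

Lemma PE_prod K : PE q 1 K * PE q (-1) K = Wh K * Wh K.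
Proof.
  induction K; cbn [PE Wh]. ring.
  assert (E : q ^ (2 * K + 1) * q ^ (2 * K + 1) = p ^ (2 * K + 1)) by (rewrite Rpow_mult_distr; reflexivity).
  transitivity ((PE q 1 K * PE q (-1) K) *
     ((1 + q ^ (2 * K + 1) * q ^ (2 * K + 1) + 2 * q ^ (2 * K + 1) * 1) *
      (1 + q ^ (2 * K + 1) * q ^ (2 * K + 1) + 2 * q ^ (2 * K + 1) * -1))). ring.
  rewrite IHK.
  transitivity (Wh K * Wh K * ((1 - q ^ (2 * K + 1) * q ^ (2 * K + 1)) * (1 - q ^ (2 * K + 1) * q ^ (2 * K + 1)))). ring.
  rewrite E. ring.
Qed.

Lemma WhEv K : Wh K * Ev K = qf p (2 * K).
Proof.
  induction K. simpl. ring.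
  replace (2 * S K)%nat with (S (S (2 * K))) by lia.
  cbn [qf Wh Ev]. rewrite <- IHK.
  replace (S (S (2 * K))) with (2 * K + 2)%nat by lia.
  replace (S (2 * K)) with (2 * K + 1)%nat by lia.
  ring.
Qed.

Lemma PpQf K : Pp K * qf p K = Ev K.
Proof.
  induction K. simpl. ring.
  cbn [Pp qf Ev]. rewrite <- IHK.
  assert (E : p ^ (2 * K + 2) = p ^ (S K) * p ^ (S K)) by (rewrite <- pow_add; f_equal; lia).
  rewrite E. simpl pow. ring.
Qed.

Lemma PpWh_le1 K : (Pp K * Wh K) * (Pp K * Wh K) <= 1.
Proof.
  pose proof (qf_pos p (pp0 q q0) (pp1 q q0 q1) K) as HK.
  pose proof (Ev_bounds K) as [E0 E1].
  assert (H : Pp K * Wh K * qf p K = qf p (2 * K)).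
  { apply Rmult_eq_reg_r with (Ev K); [|lra].
    rewrite <- WhEv. rewrite <- (PpQf K) at 2. ring. }
  assert (Hd : qf p (2 * K) <= qf p K).
  { clear H. assert (forall j, qf p (K + j) <= qf p K).
    { induction j. rewrite Nat.add_0_r; lra. eapply Rle_trans; [|exact IHj].
      replace (K + S j)%nat with (S (K + j)) by lia. apply qf_decr; [apply pp0|apply pp1]; assumption. }
    replace (2 * K)%nat with (K + K)%nat by lia. apply H. }
  assert (0 < Pp K * Wh K) by (pose proof (Pp_pos K); pose proof (Wh_pos K); nra).
  assert (Pp K * Wh K <= 1).
  { apply Rmult_le_reg_r with (qf p K). exact HK. rewrite H. lra. }
  nra.
Qed.

Lemma Wh_lower K : qf p (2 * K) <= Wh K.
Proof.
  rewrite <- WhEv. pose proof (Ev_bounds K). pose proof (Wh_pos K). nra.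
Qed.

Lemma ratio_ineq K y : PD q K (PI / 2 - y) * (qf p K * qf p K) <= PD q K y * (Pp K * Pp K).
Proof.
  induction K as [|K IH]; simpl. lra.
  replace (cos (2 * (PI / 2 - y))) with (- cos (2 * y)).
  2:{ replace (2 * (PI / 2 - y)) with (PI - 2 * y) by field. rewrite cos_minus, cos_PI, sin_PI. ring. }
  set (t := p * p ^ K). set (c := cos (2 * y)).
  assert (Ht : 0 <= t <= 1) by (apply (ppow_bounds q q0 q1 (S K))).
  assert (Hc : -1 <= c <= 1) by apply COS_bound.
  pose proof (PD_pos q q0 q1 K (PI / 2 - y)). pose proof (PD_pos q q0 q1 K y).
  pose proof (qf_pos p (pp0 q q0) (pp1 q q0 q1) K). pose proof (Pp_pos K).
  assert (Hf : (1 + t * t + 2 * t * - c) * ((1 - t) * (1 - t)) <= (1 + t * t + 2 * t * c) * ((1 + t) * (1 + t))).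
  { assert (0 <= 4 * t * (1 + t * t) * (1 + c)) by (apply Rmult_le_pos; nra). nra. }
  assert (Hf0 : 0 <= (1 + t * t + 2 * t * - c) * ((1 - t) * (1 - t))).
  { apply Rmult_le_pos; nra. }
  transitivity ((PD q K (PI / 2 - y) * (qf p K * qf p K)) * ((1 + t * t + 2 * t * - c) * ((1 - t) * (1 - t)))).
  right; ring.
  transitivity ((PD q K y * (Pp K * Pp K)) * ((1 + t * t + 2 * t * c) * ((1 + t) * (1 + t)))).
  apply Rmult_le_compat; try assumption. apply Rmult_le_pos; [lra|]. nra.
  right; ring.
Qed.

End Prod.

Lemma ex_series_dom (b c : nat -> R) : (forall n, Rabs (b n) <= c n) -> ex_series c -> ex_series b.
Proof. intros H Hc. apply (ex_series_le b c); [|exact Hc]. intros n. apply H. Qed.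

Lemma Series_abs_le (b c : nat -> R) : (forall n, Rabs (b n) <= c n) -> ex_series c -> Rabs (Series b) <= Series c.
Proof.
  intros H Hc. eapply Rle_trans. apply Series_Rabs.
  apply (ex_series_dom _ c); [|exact Hc]. intros n. rewrite Rabs_Rabsolu. apply H.
  apply Series_le; [|exact Hc]. intros n. split. apply Rabs_pos. apply H.
Qed.

Lemma sum_lim (a : nat -> R) : ex_series a -> is_lim_seq (fun n => sum_f_R0 a n) (Series a).
Proof.
  intros H. apply Series_correct in H.
  apply is_lim_seq_ext with (sum_n a). intros n. apply sum_n_Reals. exact H.
Qed.

Definition tail (a : nat -> R) (n : nat) : R := Series (fun k => a (S n + k)%nat).

Lemma tail_eq (a : nat -> R) n : ex_series a -> Series a = sum_f_R0 a n + tail a n.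
Proof. intros H. unfold tail. rewrite (Series_incr_n a (S n)) by (lia || exact H). reflexivity. Qed.

Lemma tail_lim (a : nat -> R) : ex_series a -> is_lim_seq (tail a) 0.
Proof.
  intros H. apply is_lim_seq_ext with (fun n => Series a - sum_f_R0 a n).
  intros n. rewrite (tail_eq a n H). ring.
  replace 0 with (Series a - Series a) by ring.
  apply is_lim_seq_minus'. apply is_lim_seq_const. apply sum_lim, H.
Qed.

Lemma Series_zero_tail (a : nat -> R) N : (forall n, (N < n)%nat -> a n = 0) -> ex_series a ->
  Series a = sum_f_R0 a N.
Proof.
  intros Hz H. rewrite (tail_eq a N H). unfold tail.
  rewrite (Series_ext _ (fun k => 0 * a k)). rewrite Series_scal_l. ring.
  intros k. rewrite Hz by lia. ring.
Qed.

Lemma head_lim (a : nat -> nat -> R) (l : nat -> R) n0 :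
  (forall n, is_lim_seq (fun N => a N n) (l n)) ->
  is_lim_seq (fun N => sum_f_R0 (a N) n0) (sum_f_R0 l n0).
Proof.
  intros H. induction n0. simpl. apply H.
  simpl. apply is_lim_seq_plus'. exact IHn0. apply H.
Qed.

Lemma tannery (a : nat -> nat -> R) (l M : nat -> R) :
  (forall N n, (N < n)%nat -> a N n = 0) ->
  (forall n, is_lim_seq (fun N => a N n) (l n)) ->
  (forall N n, Rabs (a N n) <= M n) -> ex_series M ->
  is_lim_seq (fun N => sum_f_R0 (a N) N) (Series l).
Proof.
  intros Hz Hl HM exM.
  assert (Ml : forall n, Rabs (l n) <= M n).
  { intros n. assert (H := is_lim_seq_abs _ _ (Hl n)).
    assert (H2 := is_lim_seq_le _ _ _ _ (fun N => HM N n) H (is_lim_seq_const (M n))).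
    simpl in H2. exact H2. }
  assert (exl : ex_series l) by (apply (ex_series_dom _ M); assumption).
  assert (exa : forall N, ex_series (a N)) by (intros N; apply (ex_series_dom _ M); auto).
  apply is_lim_seq_ext with (fun N => Series (a N)).
  { intros N. apply Series_zero_tail. apply Hz. apply exa. }
  apply is_lim_seq_spec. intros eps.
  assert (Ht := tail_lim M exM). apply is_lim_seq_spec in Ht.
  destruct (Ht (pos_div_2 (pos_div_2 eps))) as [n0 Hn0].
  specialize (Hn0 n0 (le_n _)). simpl in Hn0.
  assert (Hh := head_lim a l n0 Hl). apply is_lim_seq_spec in Hh.
  destruct (Hh (pos_div_2 eps)) as [N0 HN0].
  exists N0. intros N HN. specialize (HN0 N HN). simpl in HN0.
  rewrite (tail_eq (a N) n0 (exa N)), (tail_eq l n0 exl).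
  assert (T1 : Rabs (tail (a N) n0) <= tail M n0).
  { apply Series_abs_le. intros k. apply HM. apply ex_series_incr_n, exM. }
  assert (T2 : Rabs (tail l n0) <= tail M n0).
  { apply Series_abs_le. intros k. apply Ml. apply ex_series_incr_n, exM. }
  rewrite Rminus_0_r in Hn0.
  assert (0 <= tail M n0) by (eapply Rle_trans; [apply Rabs_pos|exact T1]).
  rewrite Rabs_pos_eq in Hn0 by lra.
  destruct eps as [e he]. simpl in *.
  apply Rabs_lt_between in HN0. apply Rabs_le_between in T1. apply Rabs_le_between in T2.
  apply Rabs_lt_between. lra.
Qed.

Lemma Mtest (u : nat -> R -> R) (M : nat -> R) (c : R) (r : posreal) :
  (forall n y, Rabs (u n y) <= M n) -> ex_series M ->
  CVU (fun n y => sum_f_R0 (fun k => u k y) n) (fun y => Series (fun k => u k y)) c r.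
Proof.
  intros HM exM eps heps.
  assert (Ht := tail_lim M exM). apply is_lim_seq_spec in Ht.
  destruct (Ht (mkposreal eps heps)) as [N0 HN0].
  exists N0. intros n y Hn _. specialize (HN0 n Hn). simpl in HN0.
  assert (exu : ex_series (fun k => u k y)) by (apply (ex_series_dom _ M); auto).
  rewrite (tail_eq _ n exu).
  replace (sum_f_R0 (fun k => u k y) n + tail (fun k => u k y) n - sum_f_R0 (fun k => u k y) n)
    with (tail (fun k => u k y) n) by ring.
  eapply Rle_lt_trans. apply Series_abs_le. intros k. apply HM. apply ex_series_incr_n, exM.
  rewrite Rminus_0_r in HN0. eapply Rle_lt_trans; [apply Rle_abs|]. exact HN0.
Qed.

Lemma filterlim_nat (phi : nat -> nat) :
  (forall N, exists M, forall K, (M <= K)%nat -> (N <= phi K)%nat) -> filterlim phi eventually eventually.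
Proof.
  intros H P [N HN]. destruct (H N) as [M HM]. exists M. intros K HK. apply HN. apply HM, HK.
Qed.

Lemma qf_lim_sub (p : R) (p0 : 0 < p) (p1 : p < 1) (phi : nat -> nat) :
  (forall N, exists M, forall K, (M <= K)%nat -> (N <= phi K)%nat) ->
  is_lim_seq (fun K => qf p (phi K)) (GG p).
Proof.
  intros H. apply (is_lim_seq_subseq (qf p) (GG p) phi). apply filterlim_nat, H.
  apply GG_lim; assumption.
Qed.

Lemma bernoulli (h : R) n : 0 <= h -> 1 + INR n * h <= (1 + h) ^ n.
Proof.
  intros Hh. induction n. simpl; lra. rewrite S_INR. simpl.
  assert (0 <= INR n) by apply pos_INR. nra.
Qed.

Section Lims.
Variable q : R.
Hypothesis q0 : 0 < q.
Hypothesis q1 : q < 1.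
Local Notation p := (q*q).
Local Notation G := (GG (q*q)).

Lemma G_pos : 0 < G.
Proof. pose proof (GG_bounds p (pp0 q q0) (pp1 q q0 q1)). pose proof (Glow_pos p). lra. Qed.

Lemma nqn n : INR n * q ^ n <= q / (1 - q).
Proof.
  set (h := (1 - q) / q).
  assert (Hh : 0 <= h) by (unfold h; apply Rlt_le, Rdiv_lt_0_compat; lra).
  pose proof (bernoulli h n Hh).
  assert (E : 1 + h = / q) by (unfold h; field; lra).
  rewrite E, pow_inv in H.
  assert (Hq : 0 < q ^ n) by (apply pow_lt; lra).
  assert (H2 : (1 + INR n * h) * q ^ n <= 1).
  { apply Rmult_le_reg_r with (/ q ^ n). apply Rinv_0_lt_compat; lra.
    rewrite Rmult_assoc, Rinv_r, Rmult_1_r, Rmult_1_l by lra. exact H. }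
  assert (INR n * q ^ n * h <= 1) by (pose proof (pos_INR n); nra).
  unfold h in H0.
  apply Rmult_le_reg_r with ((1 - q) / q). apply Rdiv_lt_0_compat; lra.
  replace (q / (1 - q) * ((1 - q) / q)) with 1 by (field; lra). exact H0.
Qed.

Definition Cb := 2 * (q / (1 - q)) + 1.

Lemma Mbound n : (2 * INR n + 1) * q ^ (n * n + n) <= Cb * q ^ n.
Proof.
  rewrite pow_add.
  assert (H1 : q ^ (n * n) <= q ^ n) by (apply pow_decr_exp; [lra | nia]).
  assert (H0 : q ^ n <= 1) by (apply (pow_decr_exp q 0 n); [lra|lia]).
  assert (H2 : (2 * INR n + 1) * q ^ n <= Cb) by (unfold Cb; pose proof (nqn n); nra).
  assert (0 <= q ^ (n * n)) by (apply pow_le; lra).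
  assert (0 <= q ^ n) by (apply pow_le; lra).
  assert (0 <= INR n) by apply pos_INR.
  assert (0 <= Cb) by (unfold Cb; assert (0 < q / (1 - q)) by (apply Rdiv_lt_0_compat; lra); lra).
  apply Rle_trans with (Cb * q ^ (n * n)).
  replace ((2 * INR n + 1) * (q ^ (n * n) * q ^ n)) with (((2 * INR n + 1) * q ^ n) * q ^ (n * n)) by ring.
  apply Rmult_le_compat_r; assumption.
  apply Rmult_le_compat_l; assumption.
Qed.

Definition Mser (n : nat) : R := / (Glow p * Glow p) * ((2 * INR n + 1) * q ^ (n * n + n)).

Lemma Mser_ex : ex_series Mser.
Proof.
  apply (ex_series_dom _ (fun n => / (Glow p * Glow p) * (Cb * q ^ n))).
  - intros n. unfold Mser. pose proof (Glow_pos p).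
    assert (0 < / (Glow p * Glow p)) by (apply Rinv_0_lt_compat; nra).
    assert (0 <= q ^ (n * n + n)) by (apply pow_le; lra). pose proof (pos_INR n).
    rewrite Rabs_pos_eq by (apply Rmult_le_pos; nra).
    apply Rmult_le_compat_l; [lra|]. apply Mbound.
  - apply (ex_series_scal_l (/ (Glow p * Glow p)) (fun n => Cb * q ^ n)).
    apply (ex_series_scal_l Cb (fun n => q ^ n)). apply ex_series_geom. rewrite Rabs_pos_eq; lra.
Qed.

Lemma Mser2_ex : ex_series (fun n => / (Glow p * Glow p) * q ^ (n * n)).
Proof.
  apply (ex_series_dom _ (fun n => / (Glow p * Glow p) * q ^ n)).
  - intros n. pose proof (Glow_pos p).
    assert (0 < / (Glow p * Glow p)) by (apply Rinv_0_lt_compat; nra).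
    assert (0 <= q ^ (n * n)) by (apply pow_le; lra).
    rewrite Rabs_pos_eq by (apply Rmult_le_pos; nra).
    apply Rmult_le_compat_l; [lra|]. apply pow_decr_exp; [lra|nia].
  - apply (ex_series_scal_l (/ (Glow p * Glow p)) (fun n => q ^ n)).
    apply ex_series_geom. rewrite Rabs_pos_eq; lra.
Qed.

Lemma bF_lim n : is_lim_seq (fun K => bF q K n) (q ^ (n * n + n) / G).
Proof.
  pose proof (pp0 q q0) as P0. pose proof (pp1 q q0 q1) as P1.
  apply is_lim_seq_ext_loc with (fun K => qf p (2 * K + 1) / (qf p (K + 1 + n) * qf p (K - n)) * q ^ (n * n + n)).
  { exists n. intros K HK. unfold bF. rewrite gb_closed by lia.
    replace (2 * K + 1 - (K + 1 + n))%nat with (K - n)%nat by lia. reflexivity. }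
  replace (q ^ (n * n + n) / G) with (G / (G * G) * q ^ (n * n + n)).
  2:{ pose proof G_pos. field. lra. }
  apply is_lim_seq_mult'; [|apply is_lim_seq_const].
  apply is_lim_seq_div'. 3:{ pose proof G_pos. nra. }
  - apply qf_lim_sub; auto. intros N. exists N. intros; lia.
  - apply is_lim_seq_mult'; apply qf_lim_sub; auto; intros N.
    exists N; intros; lia. exists (N + n)%nat; intros; lia.
Qed.

Lemma EF_lim n : is_lim_seq (fun K => EF q K n) (q ^ (n * n) / G).
Proof.
  pose proof (pp0 q q0) as P0. pose proof (pp1 q q0 q1) as P1.
  apply is_lim_seq_ext_loc with (fun K => qf p (2 * K) / (qf p (K + n) * qf p (K - n)) * q ^ (n * n)).
  { exists n. intros K HK. unfold EF. rewrite gb_closed by lia.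
    replace (2 * K - (K + n))%nat with (K - n)%nat by lia. reflexivity. }
  replace (q ^ (n * n) / G) with (G / (G * G) * q ^ (n * n)).
  2:{ pose proof G_pos. field. lra. }
  apply is_lim_seq_mult'; [|apply is_lim_seq_const].
  apply is_lim_seq_div'. 3:{ pose proof G_pos. nra. }
  - apply qf_lim_sub; auto. intros N. exists N. intros; lia.
  - apply is_lim_seq_mult'; apply qf_lim_sub; auto; intros N.
    exists N; intros; lia. exists (N + n)%nat; intros; lia.
Qed.

Lemma bF_bound K n : Rabs (bF q K n) <= / (Glow p * Glow p) * q ^ (n * n + n).
Proof.
  unfold bF. pose proof (gb_nonneg p (pp0 q q0) (pp1 q q0 q1) (2 * K + 1) (K + 1 + n)).
  pose proof (gb_bound p (pp0 q q0) (pp1 q q0 q1) (2 * K + 1) (K + 1 + n)).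
  assert (0 <= q ^ (n * n + n)) by (apply pow_le; lra).
  rewrite Rabs_pos_eq by nra. apply Rmult_le_compat_r; lra.
Qed.

Lemma EF_bound K n : Rabs (EF q K n) <= / (Glow p * Glow p) * q ^ (n * n).
Proof.
  unfold EF. pose proof (gb_nonneg p (pp0 q q0) (pp1 q q0 q1) (2 * K) (K + n)).
  pose proof (gb_bound p (pp0 q q0) (pp1 q q0 q1) (2 * K) (K + n)).
  assert (0 <= q ^ (n * n)) by (apply pow_le; lra).
  rewrite Rabs_pos_eq by nra. apply Rmult_le_compat_r; lra.
Qed.

Lemma lim_cos (y : R) : is_lim_seq (fun K => sum_f_R0 (fun n => bF q K n * cos ((2 * INR n + 1) * y)) K)
  (Series (fun n => q ^ (n * n + n) * cos ((2 * INR n + 1) * y)) / G).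
Proof.
  replace (Series (fun n => q ^ (n * n + n) * cos ((2 * INR n + 1) * y)) / G)
    with (Series (fun n => q ^ (n * n + n) / G * cos ((2 * INR n + 1) * y))).
  2:{ rewrite <- (Series_ext (fun n => / G * (q ^ (n * n + n) * cos ((2 * INR n + 1) * y)))).
      rewrite Series_scal_l. unfold Rdiv. ring. intros n. unfold Rdiv. ring. }
  apply (tannery (fun K n => bF q K n * cos ((2 * INR n + 1) * y)) _ Mser).
  - intros K n H. rewrite bF_zero by lia. ring.
  - intros n. apply is_lim_seq_mult'. apply bF_lim. apply is_lim_seq_const.
  - intros K n. rewrite Rabs_mult. unfold Mser.
    pose proof (bF_bound K n). pose proof (Rabs_pos (bF q K n)).
    assert (Rabs (cos ((2 * INR n + 1) * y)) <= 1) by apply Rabs_le, COS_bound.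
    pose proof (pos_INR n). pose proof (Glow_pos p).
    assert (0 <= q ^ (n * n + n)) by (apply pow_le; lra).
    assert (0 < / (Glow p * Glow p)) by (apply Rinv_0_lt_compat; nra).
    apply Rle_trans with (/ (Glow p * Glow p) * q ^ (n * n + n) * 1).
    apply Rmult_le_compat; try lra; apply Rabs_pos.
    nra.
  - apply Mser_ex.
Qed.

Lemma lim_sin (y : R) : is_lim_seq (fun K => sum_f_R0 (fun n => bF q K n * (2 * INR n + 1) * sin ((2 * INR n + 1) * y)) K)
  (Series (fun n => q ^ (n * n + n) * (2 * INR n + 1) * sin ((2 * INR n + 1) * y)) / G).
Proof.
  replace (Series (fun n => q ^ (n * n + n) * (2 * INR n + 1) * sin ((2 * INR n + 1) * y)) / G)
    with (Series (fun n => q ^ (n * n + n) / G * (2 * INR n + 1) * sin ((2 * INR n + 1) * y))).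
  2:{ rewrite <- (Series_ext (fun n => / G * (q ^ (n * n + n) * (2 * INR n + 1) * sin ((2 * INR n + 1) * y)))).
      rewrite Series_scal_l. unfold Rdiv. ring. intros n. unfold Rdiv. ring. }
  apply (tannery (fun K n => bF q K n * (2 * INR n + 1) * sin ((2 * INR n + 1) * y)) _ Mser).
  - intros K n H. rewrite bF_zero by lia. ring.
  - intros n. apply is_lim_seq_mult'. apply is_lim_seq_mult'. apply bF_lim.
    apply is_lim_seq_const. apply is_lim_seq_const.
  - intros K n. rewrite !Rabs_mult. unfold Mser.
    pose proof (bF_bound K n). pose proof (Rabs_pos (bF q K n)).
    assert (Rabs (sin ((2 * INR n + 1) * y)) <= 1) by apply Rabs_le, SIN_bound.
    pose proof (pos_INR n). pose proof (Glow_pos p).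
    rewrite (Rabs_pos_eq (2 * INR n + 1)) by lra.
    assert (0 <= q ^ (n * n + n)) by (apply pow_le; lra).
    assert (0 < / (Glow p * Glow p)) by (apply Rinv_0_lt_compat; nra).
    apply Rle_trans with (/ (Glow p * Glow p) * q ^ (n * n + n) * (2 * INR n + 1) * 1).
    apply Rmult_le_compat; try lra. apply Rmult_le_pos; [apply Rabs_pos|lra]. apply Rabs_pos.
    apply Rmult_le_compat_r; lra.
    nra.
  - apply Mser_ex.
Qed.

Lemma lim_E (s : R) (Hs : Rabs s = 1) : is_lim_seq (fun K => sum_f_R0 (fun n => EF q K n * s ^ n) K)
  (Series (fun n => q ^ (n * n) * s ^ n) / G).
Proof.
  replace (Series (fun n => q ^ (n * n) * s ^ n) / G)
    with (Series (fun n => q ^ (n * n) / G * s ^ n)).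
  2:{ rewrite <- (Series_ext (fun n => / G * (q ^ (n * n) * s ^ n))).
      rewrite Series_scal_l. unfold Rdiv. ring. intros n. unfold Rdiv. ring. }
  apply (tannery (fun K n => EF q K n * s ^ n) _ (fun n => / (Glow p * Glow p) * q ^ (n * n))).
  - intros K n H. rewrite EF_zero by lia. ring.
  - intros n. apply is_lim_seq_mult'. apply EF_lim. apply is_lim_seq_const.
  - intros K n. rewrite Rabs_mult, <- RPow_abs, Hs, pow1, Rmult_1_r. apply EF_bound.
  - apply Mser2_ex.
Qed.

End Lims.

Lemma exp_pow_INR (a : R) n : exp a ^ n = exp (INR n * a).
Proof.
  induction n. simpl. rewrite Rmult_0_l, exp_0. reflexivity.
  rewrite S_INR. simpl. rewrite IHn, <- exp_plus. f_equal. ring.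
Qed.

Lemma cos_half_shift n x : cos ((2 * INR n + 1) * (PI / 2 - x)) = (-1) ^ n * sin ((2 * INR n + 1) * x).
Proof.
  replace ((2 * INR n + 1) * (PI / 2 - x)) with ((2 * INR n + 1) * (PI / 2) - (2 * INR n + 1) * x) by ring.
  rewrite cos_minus.
  assert (H : cos ((2 * INR n + 1) * (PI / 2)) = 0 /\ sin ((2 * INR n + 1) * (PI / 2)) = (-1) ^ n).
  { induction n. simpl. replace ((2 * 0 + 1) * (PI / 2)) with (PI / 2) by ring.
    rewrite cos_PI2, sin_PI2. split; reflexivity.
    rewrite S_INR. replace ((2 * (INR n + 1) + 1) * (PI / 2)) with ((2 * INR n + 1) * (PI / 2) + PI) by field.
    rewrite neg_cos, neg_sin. destruct IHn as [H1 H2]. rewrite H1, H2. simpl. split; ring. }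
  destruct H as [H1 H2]. rewrite H1, H2. ring.
Qed.

Section Conn.
Variable tau0 : R.
Hypothesis ht : 0 < tau0.

Definition qq := exp (- PI * tau0).
Definition c4 := exp (- PI * tau0 * / 4).

Lemma qq_bounds : 0 < qq < 1.
Proof.
  unfold qq. split. apply exp_pos. rewrite <- exp_0. apply exp_increasing.
  pose proof PI_RGT_0. nra.
Qed.

Lemma qpow_half n : qpow tau0 ((INR n + / 2) ^ 2) = c4 * qq ^ (n * n + n).
Proof.
  unfold qpow, c4, qq. rewrite exp_pow_INR, <- exp_plus. f_equal.
  rewrite plus_INR, mult_INR. field.
Qed.

Lemma qpow_sq n : qpow tau0 (INR (S n) ^ 2) = qq ^ (S n * S n).
Proof.
  unfold qpow, qq. rewrite exp_pow_INR. f_equal. rewrite mult_INR. ring.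
Qed.

Definition Scos (y : R) := Series (fun n => qq ^ (n * n + n) * cos ((2 * INR n + 1) * y)).
Definition Ssin (y : R) := Series (fun n => qq ^ (n * n + n) * (2 * INR n + 1) * sin ((2 * INR n + 1) * y)).
Definition Tser (s : R) := Series (fun n => qq ^ (n * n) * s ^ n).

Lemma theta2_eq y : theta2 tau0 y = 2 * c4 * Scos y.
Proof.
  unfold theta2, Scos. rewrite Rmult_assoc. f_equal. rewrite <- Series_scal_l. apply Series_ext.
  intros n. rewrite qpow_half. ring.
Qed.

Lemma theta1_eq y : theta1 tau0 y = 2 * c4 * Scos (PI / 2 - y).
Proof.
  unfold theta1, Scos. rewrite Rmult_assoc. f_equal. rewrite <- Series_scal_l. apply Series_ext.
  intros n. rewrite qpow_half, cos_half_shift. ring.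
Qed.

Lemma Tser_ex s : Rabs s = 1 -> ex_series (fun n => qq ^ (n * n) * s ^ n).
Proof.
  intros Hs. pose proof qq_bounds.
  apply (ex_series_dom _ (fun n => qq ^ n)).
  - intros n. rewrite Rabs_mult, <- (RPow_abs s), Hs, pow1, Rmult_1_r.
    rewrite Rabs_pos_eq by (apply pow_le; lra). apply pow_decr_exp; [lra|nia].
  - apply ex_series_geom. rewrite Rabs_pos_eq; lra.
Qed.

Lemma theta3_eq : theta3 tau0 0 = 2 * Tser 1 - 1.
Proof.
  unfold theta3, Tser. rewrite (Series_incr_1 (fun n => qq ^ (n * n) * 1 ^ n)) by (apply Tser_ex; rewrite Rabs_R1; reflexivity).
  rewrite (Series_ext _ (fun n => qq ^ (S n * S n) * 1 ^ (S n))).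
  simpl (qq ^ (0 * 0) * 1 ^ 0). ring. intros n. rewrite qpow_sq, Rmult_0_r, cos_0, pow1. ring.
Qed.

Lemma theta4_eq : theta4 tau0 0 = 2 * Tser (-1) - 1.
Proof.
  unfold theta4, Tser. rewrite (Series_incr_1 (fun n => qq ^ (n * n) * (-1) ^ n)) by (apply Tser_ex; rewrite Rabs_left; lra).
  rewrite (Series_ext _ (fun n => qq ^ (S n * S n) * (-1) ^ (S n))).
  simpl (qq ^ (0 * 0) * (-1) ^ 0). ring. intros n. rewrite qpow_sq, Rmult_0_r, cos_0. ring.
Qed.

Lemma theta2_der x : is_derive (theta2 tau0) x (- (2 * c4 * Ssin x)).
Proof.
  pose proof qq_bounds as Hq.
  set (cn := fun n => qpow tau0 ((INR n + / 2) ^ 2)).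
  assert (Hcn : forall n, cn n = c4 * qq ^ (n * n + n)) by (intros; apply qpow_half).
  assert (Hc4 : 0 < c4) by apply exp_pos.
  assert (exM : ex_series (fun n => cn n * (2 * INR n + 1))).
  { apply (ex_series_dom _ (fun n => c4 * (Cb qq * qq ^ n))).
    - intros n. rewrite Hcn. pose proof (pos_INR n).
      assert (0 <= qq ^ (n * n + n)) by (apply pow_le; lra).
      rewrite Rabs_pos_eq by (apply Rmult_le_pos; [apply Rmult_le_pos|]; lra).
      rewrite Rmult_assoc. apply Rmult_le_compat_l; [lra|].
      rewrite Rmult_comm. apply Mbound; lra.
    - apply (ex_series_scal_l c4 (fun n => Cb qq * qq ^ n)).
      apply (ex_series_scal_l (Cb qq) (fun n => qq ^ n)). apply ex_series_geom. rewrite Rabs_pos_eq; lra. }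
  assert (Hd : derivable_pt_lim (fun y => Series (fun n => cn n * cos ((2 * INR n + 1) * y))) x
                 (Series (fun n => - (cn n * (2 * INR n + 1) * sin ((2 * INR n + 1) * x))))).
  { apply (CVU_derivable (fun K y => sum_f_R0 (fun n => cn n * cos ((2 * INR n + 1) * y)) K)
        (fun K y => sum_f_R0 (fun n => - (cn n * (2 * INR n + 1) * sin ((2 * INR n + 1) * y))) K)
        _ (fun y => Series (fun n => - (cn n * (2 * INR n + 1) * sin ((2 * INR n + 1) * y)))) x (mkposreal 1 Rlt_0_1)).
    - apply (Mtest (fun n y => - (cn n * (2 * INR n + 1) * sin ((2 * INR n + 1) * y))) (fun n => cn n * (2 * INR n + 1))).
      + intros n y. rewrite Rabs_Ropp, Rabs_mult.
        assert (0 <= cn n * (2 * INR n + 1)).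
        { rewrite Hcn. pose proof (pos_INR n). assert (0 <= qq ^ (n * n + n)) by (apply pow_le; lra).
          apply Rmult_le_pos; [apply Rmult_le_pos|]; lra. }
        rewrite (Rabs_pos_eq (cn n * _)) by lra.
        assert (Rabs (sin ((2 * INR n + 1) * y)) <= 1) by apply Rabs_le, SIN_bound.
        nra.
      + exact exM.
    - intros y _. apply is_lim_seq_Reals. apply sum_lim.
      apply (ex_series_dom _ (fun n => cn n * (2 * INR n + 1))); [|exact exM].
      intros n. rewrite Rabs_mult.
      assert (0 <= cn n) by (rewrite Hcn; apply Rmult_le_pos; [lra|apply pow_le; lra]).
      rewrite (Rabs_pos_eq (cn n)) by lra. pose proof (pos_INR n).
      assert (Rabs (cos ((2 * INR n + 1) * y)) <= 1) by apply Rabs_le, COS_bound.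
      nra.
    - intros K y _. apply is_derive_Reals. apply sumcos_der.
    - unfold Boule. simpl. rewrite Rminus_diag, Rabs_R0. lra. }
  apply is_derive_Reals in Hd.
  apply (is_derive_scal _ _ 2) in Hd.
  assert (Ev : 2 * Series (fun n => - (cn n * (2 * INR n + 1) * sin ((2 * INR n + 1) * x))) = - (2 * c4 * Ssin x)).
  { rewrite Series_opp. unfold Ssin.
    rewrite (Series_ext (fun n => cn n * (2 * INR n + 1) * sin ((2 * INR n + 1) * x))
              (fun n => c4 * (qq ^ (n * n + n) * (2 * INR n + 1) * sin ((2 * INR n + 1) * x)))).
    rewrite Series_scal_l. ring.
    intros n. rewrite Hcn. ring. }
  rewrite <- Ev.
  unfold theta2. eapply is_derive_ext; [|exact Hd]. intros t. reflexivity.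
Qed.

End Conn.

Lemma key_ineq (q : R) (q0 : 0 < q) (q1 : q < 1) (K : nat) (x : R) : 0 < x < PI / 2 ->
  (1 + 8 * (q * q) * cos x * cos x / (1 + (q * q) * (q * q) + 2 * (q * q) * cos (2 * x)))
  * (cos (PI / 2 - x) * PD q (S K) (PI / 2 - x)) * (qf (q * q) (S K) * qf (q * q) (S K))
  * (Wh q (S K) * Wh q (S K))
  <= sin x * PD q (S K) x - cos x * PDd q (S K) x.
Proof.
  intros Hx.
  pose proof (pp0 q q0) as P0. pose proof (pp1 q q0 q1) as P1.
  set (p := q * q) in *.
  assert (Hs : 0 < sin x) by (apply sin_gt_0; lra).
  assert (Hc : 0 < cos x) by (apply cos_gt_0; lra).
  assert (Hs2 : sin (2 * x) = 2 * sin x * cos x) by apply sin_2a.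
  assert (Hs2p : 0 <= sin (2 * x)) by (rewrite Hs2; nra).
  set (D1 := 1 + p * p + 2 * p * cos (2 * x)).
  assert (HD1 : 0 < D1).
  { pose proof (COS_bound (2 * x)) as [C1 C2]. pose proof (Dfac_lower p (cos (2 * x)) ltac:(lra) C1).
    unfold D1. nra. }
  pose proof (PDd_bound q q0 q1 x Hs2p K) as HB. fold p in HB. fold D1 in HB.
  set (PDx := PD q (S K) x) in *. set (PDy := PD q (S K) (PI / 2 - x)) in *.
  set (dd := PDd q (S K) x) in *.
  set (delta := 8 * p * cos x * cos x / D1).
  assert (Hdel' : 0 <= delta).
  { unfold delta. apply Rmult_le_pos. nra. left; apply Rinv_0_lt_compat; lra. }
  assert (HPDx : 0 < PDx) by (apply PD_pos; auto).
  assert (HPDy : 0 < PDy) by (apply PD_pos; auto).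
  assert (Step1 : sin x * PDx * (1 + delta) <= sin x * PDx - cos x * dd).
  { assert (E : sin x * PDx * delta = cos x * (PDx * (4 * p * sin (2 * x))) / D1).
    { unfold delta. rewrite Hs2. field. lra. }
    assert (cos x * (PDx * (4 * p * sin (2 * x))) / D1 <= - cos x * dd).
    { apply Rmult_le_reg_r with D1. exact HD1. unfold Rdiv. rewrite Rmult_assoc, Rinv_l, Rmult_1_r by lra.
      replace (- cos x * dd * D1) with (cos x * (- dd * D1)) by ring.
      apply Rmult_le_compat_l; lra. }
    nra. }
  pose proof (ratio_ineq q q0 q1 (S K) x) as HR. fold p in HR. fold PDx PDy in HR.
  pose proof (PpWh_le1 q q0 q1 (S K)) as HW. fold p in HW.
  pose proof (Pp_pos q q0 q1 (S K)). pose proof (Wh_pos q q0 q1 (S K)).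
  pose proof (qf_pos p P0 P1 (S K)).
  set (Pq := Pp q (S K)) in *. set (W := Wh q (S K)) in *. set (Q := qf p (S K)) in *.
  assert (Step2 : PDy * (Q * Q) * (W * W) <= PDx).
  { apply Rle_trans with (PDx * (Pq * Pq) * (W * W)).
    apply Rmult_le_compat_r; [nra|exact HR].
    replace (PDx * (Pq * Pq) * (W * W)) with (PDx * ((Pq * W) * (Pq * W))) by ring.
    assert (PDx * ((Pq * W) * (Pq * W)) <= PDx * 1) by (apply Rmult_le_compat_l; lra). lra. }
  rewrite cos_shift.
  apply Rle_trans with (sin x * PDx * (1 + delta)); [|exact Step1].
  replace ((1 + delta) * (sin x * PDy) * (Q * Q) * (W * W)) with ((sin x * (1 + delta)) * (PDy * (Q * Q) * (W * W))) by ring.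
  replace (sin x * PDx * (1 + delta)) with ((sin x * (1 + delta)) * PDx) by ring.
  apply Rmult_le_compat_l; [nra|exact Step2].
Qed.

Theorem lemma2 (tau0 alpha : R) :
  0 < tau0 -> 0 < alpha < PI ->
  g0_fun tau0 alpha > f_fun tau0 alpha /\ f_fun tau0 alpha > 0.
Proof.
  intros Ht Ha.
  unfold g0_fun, f_fun.
  set (x := alpha / 2).
  assert (Hx : 0 < x < PI / 2) by (unfold x; lra).
  rewrite (is_derive_unique _ _ _ (theta2_der tau0 Ht x)).
  rewrite (theta2_eq tau0 x), (theta1_eq tau0 x), (theta3_eq tau0), (theta4_eq tau0).
  pose proof (qq_bounds tau0 Ht) as [q0 q1].
  set (q := qq tau0) in *.
  pose proof (G_pos q q0 q1) as HG.
  set (G := GG (q * q)) in *.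
  assert (Hc4 : 0 < c4 tau0) by apply exp_pos.
  assert (P0 := pp0 q q0). assert (P1 := pp1 q q0 q1).
  assert (Lqf : is_lim_seq (qf (q * q)) G) by (apply GG_lim; assumption).
  assert (Lcos : forall y, is_lim_seq (fun K => cos y * PD q K y) (Scos tau0 y / G)).
  { intros y. eapply is_lim_seq_ext; [|apply (lim_cos q q0 q1 y)]. intros K. symmetry. apply fam2; assumption. }
  assert (Lsin : is_lim_seq (fun K => sin x * PD q K x - cos x * PDd q K x) (Ssin tau0 x / G)).
  { eapply is_lim_seq_ext; [|apply (lim_sin q q0 q1 x)]. intros K. apply sumsin_eq; assumption. }
  assert (LPE : forall s, Rabs s = 1 -> s * s = 1 -> is_lim_seq (fun K => PE q s K) ((2 * Tser tau0 s - 1) / G)).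
  { intros s Hs Hs2. eapply is_lim_seq_ext. intros K. symmetry. apply fam1; assumption.
    replace ((2 * Tser tau0 s - 1) / G) with (2 * (Tser tau0 s / G) - q ^ (0 * 0) / G) by (simpl; field; lra).
    apply is_lim_seq_minus'. apply is_lim_seq_mult'. apply is_lim_seq_const.
    apply (lim_E q q0 q1 s Hs). apply (EF_lim q q0 q1 0). }
  assert (LW : is_lim_seq (fun K => Wh q K * Wh q K)
                 ((2 * Tser tau0 1 - 1) / G * ((2 * Tser tau0 (-1) - 1) / G))).
  { eapply is_lim_seq_ext. intros K. apply PE_prod; assumption.
    apply is_lim_seq_mult'. apply LPE. rewrite Rabs_R1; reflexivity. ring.
    apply LPE. rewrite Rabs_left; lra. ring. }
  assert (Hpos : forall y, 0 < y < PI / 2 -> 0 < Scos tau0 y).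
  { intros y Hy. assert (Hcy : 0 < cos y) by (apply cos_gt_0; lra).
    assert (H := is_lim_seq_le (fun K => cos y * (qf (q * q) K * qf (q * q) K)) (fun K => cos y * PD q K y)
                   (cos y * (G * G)) (Scos tau0 y / G)).
    simpl in H. assert (H2 : cos y * (G * G) <= Scos tau0 y / G).
    { apply H. intros K. apply Rmult_le_compat_l. lra. apply PD_lower; assumption.
      apply is_lim_seq_mult'. apply is_lim_seq_const. apply is_lim_seq_mult'; assumption.
      apply Lcos. }
    assert (0 < Scos tau0 y / G) by (apply Rlt_le_trans with (cos y * (G * G)); [apply Rmult_lt_0_compat; [lra|apply Rmult_lt_0_compat; lra]|exact H2]).
    apply Rmult_lt_reg_r with (/ G). apply Rinv_0_lt_compat; lra. rewrite Rmult_0_l. exact H0. }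
  set (A := (2 * Tser tau0 1 - 1) * (2 * Tser tau0 (-1) - 1)).
  assert (HA : 0 < A).
  { assert (H := is_lim_seq_le (fun _ => Glow (q * q) * Glow (q * q)) (fun K => Wh q K * Wh q K) (Glow (q * q) * Glow (q * q)) ((2 * Tser tau0 1 - 1) / G * ((2 * Tser tau0 (-1) - 1) / G))).
    assert (H2 : Glow (q * q) * Glow (q * q) <= (2 * Tser tau0 1 - 1) / G * ((2 * Tser tau0 (-1) - 1) / G)).
    { apply H. intros K. pose proof (qf_lower (q * q) P0 P1 (2 * K)). pose proof (Wh_lower q q0 q1 K).
      pose proof (Glow_pos (q * q)). nra. apply is_lim_seq_const. exact LW. }
    pose proof (Glow_pos (q * q)).
    assert (HX : 0 < (2 * Tser tau0 1 - 1) / G * ((2 * Tser tau0 (-1) - 1) / G)).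
    { apply Rlt_le_trans with (Glow (q * q) * Glow (q * q)); [apply Rmult_lt_0_compat; lra|exact H2]. }
    replace A with (((2 * Tser tau0 1 - 1) / G * ((2 * Tser tau0 (-1) - 1) / G)) * (G * G)) by (unfold A; field; lra).
    apply Rmult_lt_0_compat; [exact HX|apply Rmult_lt_0_compat; lra]. }
  set (delta := 8 * (q * q) * cos x * cos x / (1 + (q * q) * (q * q) + 2 * (q * q) * cos (2 * x))).
  assert (Hdelta : 0 < delta).
  { unfold delta. assert (Hc : 0 < cos x) by (apply cos_gt_0; lra).
    pose proof (COS_bound (2 * x)) as [C1 C2]. pose proof (Dfac_lower (q * q) (cos (2 * x)) ltac:(lra) C1).
    apply Rdiv_lt_0_compat. repeat apply Rmult_lt_0_compat; lra.
    assert (0 < (1 - q * q) * (1 - q * q)) by (apply Rmult_lt_0_compat; lra). lra. }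
  assert (Key : (1 + delta) * (Scos tau0 (PI / 2 - x) / G) * (G * G) * ((2 * Tser tau0 1 - 1) / G * ((2 * Tser tau0 (-1) - 1) / G))
                <= Ssin tau0 x / G).
  { set (f := fun K => (1 + delta) * (cos (PI / 2 - x) * PD q (S K) (PI / 2 - x)) * (qf (q * q) (S K) * qf (q * q) (S K)) * (Wh q (S K) * Wh q (S K))).
    set (g := fun K => sin x * PD q (S K) x - cos x * PDd q (S K) x).
    assert (Hfg : forall K, f K <= g K) by (intros K; unfold f, g; apply key_ineq; assumption).
    assert (Hf : is_lim_seq f ((1 + delta) * (Scos tau0 (PI / 2 - x) / G) * (G * G) * ((2 * Tser tau0 1 - 1) / G * ((2 * Tser tau0 (-1) - 1) / G)))).
    { unfold f. apply is_lim_seq_mult'. apply is_lim_seq_mult'. apply is_lim_seq_mult'. apply is_lim_seq_const.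
      apply (proj1 (is_lim_seq_incr_1 _ _) (Lcos (PI / 2 - x))).
      apply (proj1 (is_lim_seq_incr_1 (fun K => qf (q * q) K * qf (q * q) K) _)). apply is_lim_seq_mult'; assumption.
      apply (proj1 (is_lim_seq_incr_1 _ _) LW). }
    assert (Hg : is_lim_seq g (Ssin tau0 x / G)) by (apply (proj1 (is_lim_seq_incr_1 _ _) Lsin)).
    exact (is_lim_seq_le f g _ _ Hfg Hf Hg). }
  assert (Key2 : (1 + delta) * Scos tau0 (PI / 2 - x) * A <= Ssin tau0 x).
  { apply Rmult_le_reg_r with (/ G). apply Rinv_0_lt_compat; lra.
    replace ((1 + delta) * Scos tau0 (PI / 2 - x) * A * / G) with
      ((1 + delta) * (Scos tau0 (PI / 2 - x) / G) * (G * G) * ((2 * Tser tau0 1 - 1) / G * ((2 * Tser tau0 (-1) - 1) / G)))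
      by (unfold A; field; lra).
    exact Key. }
  pose proof (Hpos x Hx) as Hsc. pose proof (Hpos (PI / 2 - x) ltac:(lra)) as Hsc'.
  fold A.
  set (Sc := Scos tau0 x) in *. set (Sc' := Scos tau0 (PI / 2 - x)) in *. set (Ss := Ssin tau0 x) in *.
  replace (- (1 / A) * (- (2 * c4 tau0 * Ss) / (2 * c4 tau0 * Sc))) with (Ss / (A * Sc)) by (field; repeat split; lra).
  replace (2 * c4 tau0 * Sc' / (2 * c4 tau0 * Sc)) with (Sc' / Sc) by (field; split; lra).
  split.
  - apply Rlt_0_minus.
    replace (Ss / (A * Sc) - Sc' / Sc) with ((Ss - A * Sc') / (A * Sc)) by (field; split; lra).
    apply Rdiv_lt_0_compat.
    + assert (0 < delta * Sc' * A) by (apply Rmult_lt_0_compat; [apply Rmult_lt_0_compat|]; lra).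
      assert (E : (1 + delta) * Sc' * A = A * Sc' + delta * Sc' * A) by ring. lra.
    + apply Rmult_lt_0_compat; lra.
  - apply Rdiv_lt_0_compat; lra.
all: exact Ht.
Qed.
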